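(* Let $A=(a_{ij}) \in \mathbb{R}^{m \times r}$ and $B=(b_{ji}) \in \mathbb{R}^{r \times n}$ with $B$ of full rank $n$. The following are equivalent: (i) for all $\kappa \in \mathbb{R}^r_+$ and $y \in \mathbb{R}^m$, the system $\sum_{j=1}^r a_{ij}\, \kappa_j\, x_1^{b_{j1}} \cdots x_n^{b_{jn}} = y_i$, $i = 1, \dots, m$, has at most one solution $x \in \mathbb{R}^n_+$; (ii) $\sigma(\ker(A)) \cap \sigma(\mathrm{im}(B)) = \{0\}$.
   Context: $\mathbb{R}_+$ denotes the strictly positive reals; exponents are arbitrary reals. $\sigma$ is the componentwise sign vector in $\{-,0,+\}^r$, $\sigma(T)=\{\sigma(x)\mid x\in T\}$, and $0$ denotes the zero sign vector. *)

(* Defs.v *)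
From Stdlib Require Import Reals List.
Import ListNotations.
Open Scope R_scope.

(* Vectors in R^d are functions nat -> R, only indices < d matter.
   Matrices are functions nat -> nat -> R. *)

Definition sumR (d : nat) (f : nat -> R) : R :=
  fold_right Rplus 0 (map f (seq 0 d)).
Definition prodR (d : nat) (f : nat -> R) : R :=
  fold_right Rmult 1 (map f (seq 0 d)).

Inductive sign := Neg | Zero | Pos.

Definition sgn (x : R) : sign :=
  match Rlt_dec x 0 with
  | left _ => Neg
  | right _ => if Req_dec_T x 0 then Zero else Pos
  end.

Definition sigma (d : nat) (x : nat -> R) : list sign :=
  map (fun j => sgn (x j)) (seq 0 d).

Definition zero_sign (d : nat) : list sign := repeat Zero d.

Definition in_ker (m r : nat) (A : nat -> nat -> R) (u : nat -> R) : Prop :=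
  forall i, (i < m)%nat -> sumR r (fun j => A i j * u j) = 0.

Definition in_im (r n : nat) (B : nat -> nat -> R) (w : nat -> R) : Prop :=
  exists v : nat -> R, forall j, (j < r)%nat -> w j = sumR n (fun k => B j k * v k).

Definition full_col_rank (r n : nat) (B : nat -> nat -> R) : Prop :=
  forall v : nat -> R,
    (forall j, (j < r)%nat -> sumR n (fun k => B j k * v k) = 0) ->
    forall k, (k < n)%nat -> v k = 0.

Definition gmap (r n : nat) (A B : nat -> nat -> R) (kappa x : nat -> R) (i : nat) : R :=
  sumR r (fun j => A i j * kappa j * prodR n (fun k => Rpower (x k) (B j k))).

Definition positive_vec (d : nat) (x : nat -> R) : Prop :=
  forall k, (k < d)%nat -> 0 < x k.

Definition at_most_one_pos_solution (m r n : nat) (A B : nat -> nat -> R) : Prop :=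
  forall kappa : nat -> R, positive_vec r kappa ->
  forall y : nat -> R,
  forall x1 x2 : nat -> R,
    positive_vec n x1 -> positive_vec n x2 ->
    (forall i, (i < m)%nat -> gmap r n A B kappa x1 i = y i) ->
    (forall i, (i < m)%nat -> gmap r n A B kappa x2 i = y i) ->
    forall k, (k < n)%nat -> x1 k = x2 k.

Definition sign_condition (m r n : nat) (A B : nat -> nat -> R) : Prop :=
  forall s : list sign,
    ((exists u, in_ker m r A u /\ sigma r u = s) /\
     (exists w, in_im r n B w /\ sigma r w = s))
    <-> s = zero_sign r.

(* Main.v *)
Require Import Defs.
From Stdlib Require Import Reals List Lra Lia.
Import Defs.
Open Scope R_scope.

Lemma sumR_ext d f g : (forall j, (j<d)%nat -> f j = g j) -> sumR d f = sumR d g.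
Proof. intros H. unfold sumR. f_equal. apply map_ext_in. intros j Hj.
  apply in_seq in Hj. apply H. lia. Qed.

Lemma sumR_0 d : sumR d (fun _ => 0) = 0.
Proof. unfold sumR. induction (seq 0 d) as [|a l IH]; simpl; [ring| rewrite IH; ring]. Qed.

Lemma sumR_zero d f : (forall j, (j<d)%nat -> f j = 0) -> sumR d f = 0.
Proof. intros H. rewrite <- (sumR_0 d). apply sumR_ext. exact H. Qed.

Lemma sumR_minus d f g : sumR d f - sumR d g = sumR d (fun j => f j - g j).
Proof. unfold sumR. induction (seq 0 d) as [|a l IH]; simpl; [ring| rewrite <- IH; ring]. Qed.

Lemma prod_exp d f : prodR d (fun k => exp (f k)) = exp (sumR d f).
Proof. unfold prodR, sumR. induction (seq 0 d) as [|a l IH]; simpl.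
  - now rewrite exp_0.
  - rewrite IH, exp_plus. ring. Qed.

Lemma mono n (B : nat -> nat -> R) j x :
  prodR n (fun k => Rpower (x k) (B j k)) = exp (sumR n (fun k => B j k * ln (x k))).
Proof. unfold Rpower. apply prod_exp. Qed.

Lemma sgn_Zero x : sgn x = Zero -> x = 0.
Proof. unfold sgn. destruct (Rlt_dec x 0); try discriminate.
  destruct (Req_dec_T x 0); auto; discriminate. Qed.

Lemma sgn_0 : sgn 0 = Zero.
Proof. unfold sgn. destruct (Rlt_dec 0 0); [lra|]. destruct (Req_dec_T 0 0); auto. lra. Qed.

Lemma sgn_eq x y : (x<0 -> y<0) -> (y<0->x<0) -> (x=0 -> y=0) -> (y=0->x=0) -> sgn x = sgn y.
Proof. intros. unfold sgn. destruct (Rlt_dec x 0), (Rlt_dec y 0); try (exfalso; intuition; fail); auto.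
  destruct (Req_dec_T x 0), (Req_dec_T y 0); auto; exfalso; intuition. Qed.

Lemma sgn_inv x y: sgn x = sgn y -> (x<0 -> y<0) /\ (x=0 -> y=0) /\ (0<x -> 0<y).
Proof. unfold sgn. destruct (Rlt_dec x 0), (Rlt_dec y 0);
  destruct (Req_dec_T x 0), (Req_dec_T y 0); intros; try discriminate; split; try split; intros; lra. Qed.

Lemma sigma_nth (d : nat) (u : nat -> R) (j : nat): (j<d)%nat -> nth j (sigma d u) Zero = sgn (u j).
Proof. intros H. unfold sigma.
  transitivity (nth j (map (fun j => sgn (u j)) (seq 0 d)) ((fun j => sgn (u j)) 0%nat)).
  { apply nth_indep. rewrite length_map, length_seq; lia. }
  pose proof (map_nth (fun j => sgn (u j)) (seq 0 d) 0%nat j) as E. cbv beta in E |- *.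
  rewrite E, seq_nth by lia. reflexivity. Qed.

Lemma sigma_zero (d : nat) (u : nat -> R): (forall j, (j<d)%nat -> u j = 0) -> sigma d u = zero_sign d.
Proof. intros H. unfold sigma, zero_sign.
  rewrite (map_ext_in _ (fun _ => Zero)).
  - now rewrite map_const, length_seq.
  - intros j Hj. apply in_seq in Hj. rewrite H by lia. apply sgn_0. Qed.

Lemma sigma_zero_inv (d : nat) (u : nat -> R): sigma d u = zero_sign d -> forall j, (j<d)%nat -> u j = 0.
Proof. intros H j Hj. apply sgn_Zero. rewrite <- (sigma_nth d) by auto. rewrite H.
  unfold zero_sign. apply nth_repeat. Qed.

Lemma sigma_sgn (d : nat) (u w : nat -> R) (j : nat) : sigma d u = sigma d w -> (j<d)%nat -> sgn (u j) = sgn (w j).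
Proof. intros H Hj. rewrite <- !(sigma_nth d) by auto. now rewrite H. Qed.

Lemma exp_m1_sign w : (w < 0 -> exp w - 1 < 0) /\ (0 < w -> 0 < exp w - 1).
Proof. split; intros; [assert (exp w < exp 0) by (apply exp_increasing; lra)
  | assert (exp 0 < exp w) by (apply exp_increasing; lra)]; rewrite exp_0 in *; lra. Qed.

Theorem mainTheorem19 (m r n : nat) (A B : nat -> nat -> R)
  (HB : full_col_rank r n B) :
  at_most_one_pos_solution m r n A B <-> sign_condition m r n A B.
Proof.
  split.
  - intros H1 s. split.
    + intros [[u [Hu Hus]] [w [[v Hv] Hws]]].
      rewrite <- Hus in Hws. subst s.
      set (kappa := fun j => if Req_dec_T (w j) 0 then 1 else u j / (exp (w j) - 1)).
      assert (Hk : forall j, (j<r)%nat -> 0 < kappa j /\ kappa j * (exp (w j) - 1) = u j).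
      { intros j Hj. pose proof (sgn_inv _ _ (sigma_sgn _ _ _ _ Hws Hj)) as [a [b c]].
        pose proof (sgn_inv _ _ (eq_sym (sigma_sgn _ _ _ _ Hws Hj))) as [a' [b' c']].
        destruct (exp_m1_sign (w j)) as [e1 e2].
        unfold kappa; cbv beta. destruct (Req_dec_T (w j) 0) as [E|E].
        - rewrite (b E), E, exp_0. split; [lra|ring].
        - destruct (Rlt_dec (w j) 0).
          + split. apply Rdiv_neg_neg; auto.
            field. lra.
          + assert (0 < w j) by lra. split. apply Rdiv_lt_0_compat; auto.
            field. lra. }
      assert (Hx1 : positive_vec n (fun k => exp (v k))) by (intros k _; apply exp_pos).
      assert (Hx2 : positive_vec n (fun _ => 1)) by (intros k _; lra).
      assert (Heq : forall k, (k<n)%nat -> exp (v k) = 1).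
      { apply (H1 kappa (fun j Hj => proj1 (Hk j Hj)) (gmap r n A B kappa (fun _ => 1))
               _ _ Hx1 Hx2); auto.
        intros i Hi. apply Rminus_diag_uniq. unfold gmap. rewrite sumR_minus.
        rewrite <- (Hu i Hi). apply sumR_ext. intros j Hj. rewrite !mono.
        rewrite (sumR_ext n (fun k => B j k * ln (exp (v k))) (fun k => B j k * v k))
          by (intros; now rewrite ln_exp).
        rewrite (sumR_ext n (fun k => B j k * ln 1) (fun _ => 0))
          by (intros; rewrite ln_1; ring).
        rewrite sumR_0, exp_0, <- (Hv j Hj). rewrite <- (proj2 (Hk j Hj)). ring. }
      rewrite <- Hws. apply sigma_zero. intros j Hj. rewrite Hv by auto.
      apply sumR_zero. intros k Hk'.
      assert (v k = 0). { rewrite <- (ln_exp (v k)), Heq, ln_1 by auto. reflexivity. }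
      rewrite H. ring.
    + intros ->. split.
      * exists (fun _ => 0). split. intros i Hi. apply sumR_zero; intros; ring.
        apply sigma_zero; auto.
      * exists (fun _ => 0). split. exists (fun _ => 0). intros j Hj. symmetry; apply sumR_zero; intros; ring. apply sigma_zero; auto.
  - intros H2 kappa Hk y x1 x2 Hx1 Hx2 E1 E2.
    set (v := fun k => ln (x1 k) - ln (x2 k)).
    set (w := fun j => sumR n (fun k => B j k * v k)).
    set (u := fun j => kappa j * (exp (sumR n (fun k => B j k * ln (x1 k)))
                                  - exp (sumR n (fun k => B j k * ln (x2 k))))).
    assert (Hw : forall j, (j<r)%nat -> sumR n (fun k => B j k * ln (x1 k)) =
                 sumR n (fun k => B j k * ln (x2 k)) + w j).
    { intros j _. enough (sumR n (fun k => B j k * ln (x1 k)) - sumR n (fun k => B j k * ln (x2 k)) = w j) by lra.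
      rewrite sumR_minus. unfold w. apply sumR_ext. intros. unfold v. ring. }
    assert (Hsig : sigma r u = sigma r w).
    { unfold sigma. apply map_ext_in. intros j Hj. apply in_seq in Hj.
      assert (Hj' : (j<r)%nat) by lia. pose proof (Hk j Hj') as kp.
      unfold u. rewrite Hw by auto. rewrite exp_plus.
      set (a := exp (sumR n (fun k => B j k * ln (x2 k)))).
      assert (0 < a) by apply exp_pos.
      destruct (exp_m1_sign (w j)) as [e1 e2].
      assert (ex : kappa j * (a * exp (w j) - a) = (kappa j * a) * (exp (w j) - 1)) by ring.
      rewrite ex. assert (0 < kappa j * a) by (apply Rmult_lt_0_compat; auto).
      apply sgn_eq; intros Q.
      - destruct (Rtotal_order (w j) 0) as [Q1|[Q1|Q1]]; auto.
        + rewrite Q1, exp_0 in Q. lra.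
        + apply e2 in Q1. nra.
      - apply e1 in Q. nra.
      - destruct (Rtotal_order (w j) 0) as [Q1|[Q1|Q1]]; auto.
        + apply e1 in Q1. nra.
        + apply e2 in Q1. nra.
      - rewrite Q, exp_0. ring. }
    assert (Hz : sigma r w = zero_sign r).
    { apply H2. split.
      - exists u. split; auto. intros i Hi.
        rewrite <- (Rminus_diag_eq _ _ (eq_trans (E1 i Hi) (eq_sym (E2 i Hi)))).
        unfold gmap. rewrite sumR_minus. apply sumR_ext. intros j Hj.
        rewrite !mono. unfold u. ring.
      - exists w. split; auto. exists v. intros; reflexivity. }
    pose proof (sigma_zero_inv _ _ Hz) as Hw0.
    intros k Hk'. apply ln_inv; auto.
    assert (v k = 0) by (apply (HB v Hw0); auto).
    unfold v in H. lra.
Qed.
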